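(* Let $n\ge2$, let $\lambda\in\mathbb{R}$ with $\lambda\neq0$, and let $L$ be the operator on $\mathbb{R}[p_1,\dots,p_n]$ (extended to rational functions in the same way) defined by $L\cdot f(p_1,\dots,p_n) = f(L\cdot p_1,\dots,L\cdot p_n)$, where $L\cdot p_1 = \lambda p_1$ and $L\cdot p_k = \lambda p_k + p_{k-1}$ for $k=2,\dots,n$. Then there exist $n-1$ rational functions $$J_k = \frac{G_k}{p_1^k},\qquad k = 1,\dots,n-1,$$ where each $G_k\in\mathbb{R}[p_1,\dots,p_{k+1}]$ is a polynomial of degree $k$, such that $J_1,\dots,J_{n-1}$ are functionally independent outside an algebraic subvariety of positive codimension and $$L\cdot J_k = J_k + \frac{1}{\lambda^k},\qquad k=1,\dots,n-1.$$ *)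

(* Defs.v *)
From HB Require Import structures.
From mathcomp Require Import all_boot all_order all_algebra.
From mathcomp Require Import reals.
From mathcomp.multinomials Require Import mpoly.

Set Implicit Arguments.
Unset Strict Implicit.
Unset Printing Implicit Defensive.

Import Order.TTheory GRing.Theory Num.Theory.
Local Open Scope ring_scope.

(* Variables p_1, ..., p_n are 'X_i for i : 'I_n, with p_(k) = 'X_(k-1). *)

(* The linear substitution L on points of R^n:
   (L x)_1 = lam x_1,  (L x)_k = lam x_k + x_(k-1) for k >= 2.
   For a (rational) function f, (L . f)(x) = f(L x). *)
Definition Lpt (R : ringType) (n : nat) (lam : R) (x : 'I_n -> R) : 'I_n -> R :=
  fun i => lam * x i + (if (i : nat) is k.+1 then
                          (if (k < n)%N =P true is ReflectT hk then x (Ordinal hk) else 0)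
                        else 0).

Definition Jval (R : fieldType) (n : nat) (k : nat) (G : {mpoly R[n]})
  (x0 : 'I_n) (x : 'I_n -> R) : R :=
  meval x G / (x x0) ^+ k.

Definition mpoly_in_first_vars (R : ringType) (n m : nat) (G : {mpoly R[n]}) : Prop :=
  forall mon : 'X_{1..n}, mon \in msupp G -> forall j : 'I_n, (m < j)%N -> mon j = 0%N.

(* Partial derivative d/dp_j of J = G / p_1^k at x (quotient rule), p_1 = 'X_x0. *)
Definition dJval (R : fieldType) (n : nat) (k : nat) (G : {mpoly R[n]})
  (x0 : 'I_n) (j : 'I_n) (x : 'I_n -> R) : R :=
  (meval x (G^`M(j)) * x x0 - k%:R * meval x G * (j == x0)%:R) / (x x0) ^+ k.+1.

(* Main.v *)
Require Import Defs.
From HB Require Import structures.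
From mathcomp Require Import all_boot all_order all_algebra.
From mathcomp Require Import reals.
From mathcomp.multinomials Require Import mpoly.
From mathcomp Require Import ring.
Import Order.TTheory GRing.Theory Num.Theory.
Local Open Scope ring_scope.

Module Agood.
Set Implicit Arguments.
Unset Strict Implicit.

Set Implicit Arguments.
Unset Strict Implicit.
Section Good.
Variables (R : fieldType) (n : nat).
Definition good (d m : nat) (P : {mpoly R[n]}) :=
  forall mon, mon \in msupp P -> mdeg mon = d /\ forall j : 'I_n, (m < j)%N -> mon j = 0%N.

Lemma good0 d m : good d m 0.
Proof. by move=> mon; have /eqP -> : msupp (0 : {mpoly R[n]}) == [::] by rewrite msupp_eq0. Qed.

Lemma goodC m c : good 0 m c%:MP.
Proof. move=> mon; rewrite msuppC; case: eqP => //= _; rewrite inE => /eqP ->.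
by rewrite mdeg0; split=> // j _; rewrite mnm0E. Qed.

Lemma goodX m (j : 'I_n) : (j <= m)%N -> good 1 m 'X_j.
Proof. move=> hj mon; rewrite msuppX inE => /eqP ->; split; first by rewrite mdeg1.
by move=> l hl; rewrite mnm1E; case: eqP => // e; rewrite -e ltnNge hj in hl. Qed.

Lemma goodD d m P Q : good d m P -> good d m Q -> good d m (P + Q).
Proof. by move=> hP hQ mon /msuppD_le; rewrite mem_cat => /orP[/hP|/hQ]. Qed.

Lemma goodZ d m c P : good d m P -> good d m (c *: P).
Proof. by move=> hP mon /msuppZ_le /hP. Qed.

Lemma goodN d m P : good d m P -> good d m (- P).
Proof. by move=> hP; rewrite -scaleN1r; apply: goodZ. Qed.

Lemma goodM d1 d2 m P Q : good d1 m P -> good d2 m Q -> good (d1 + d2) m (P * Q).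
Proof.
move=> hP hQ mon /msuppM_le /allpairsP [[m1 m2] /= [/hP [h1 h1'] /hQ [h2 h2'] ->]].
rewrite mdegD h1 h2; split=> // j hj; by rewrite mnmDE h1' ?h2'.
Qed.

Lemma goodW d m m' P : (m <= m')%N -> good d m P -> good d m' P.
Proof. move=> hm hP mon /hP [h1 h2]; split=> // j hj; apply: h2; exact: leq_ltn_trans hj. Qed.

Lemma good_sum d m (I : finType) (F : I -> {mpoly R[n]}) :
  (forall i, good d m (F i)) -> good d m (\sum_i F i).
Proof. move=> h; apply: (big_ind (good d m)) => //; [exact: good0| exact: goodD]. Qed.

Lemma good_prod m k (F : 'I_k -> {mpoly R[n]}) :
  (forall i, good 1 m (F i)) -> good k m (\prod_i F i).
Proof.
elim: k F => [|k IH] F h; first by rewrite big_ord0 -[1]/(1%:MP); exact: goodC.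
rewrite big_ord_recr /=.
have := goodM (IH (fun i => F (widen_ord (leqnSn k) i)) (fun i => h _)) (h ord_max).
by rewrite addn1.
Qed.

Lemma goodXn m (j : 'I_n) k : (j <= m)%N -> good k m ('X_j ^+ k).
Proof. move=> hj; have := good_prod (fun _ : 'I_k => goodX hj); by rewrite prodr_const card_ord. Qed.

Lemma good_deriv d m P (j : 'I_n) : good d m P -> (m < j)%N -> P^`M(j) = 0.
Proof.
move=> hP hj; apply/mpolyP => mon; rewrite mcoeff_deriv mcoeff0.
case: (boolP (mon + U_(j) \in msupp P))%MM => [/hP [_ /(_ j hj)]|].
  by rewrite mnmDE mnm1E eqxx addn1.
by move/memN_msupp_eq0 => ->; rewrite mul0rn.
Qed.

Lemma good_msize d m P : good d m P -> P != 0 -> msize P = d.+1.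
Proof.
move=> hP nz; rewrite msizeE.
have: msupp P != [::] by rewrite msupp_eq0.
have: forall mon, mon \in msupp P -> (mdeg mon).+1 = d.+1 by move=> mon /hP [->].
elim: (msupp P) => [|a s IH] //= h _; rewrite big_cons h ?mem_head //.
case: (altP (s =P [::])) => [->|ns]; first by rewrite big_nil maxn0.
rewrite IH ?maxnn // => mon ms; apply: h; by rewrite inE ms orbT.
Qed.
End Good.

End Agood.
Import Agood.

Module B.
Set Implicit Arguments.
Unset Strict Implicit.
Set Implicit Arguments.
Unset Strict Implicit.

Section Pt.
Variable R : realType.

Definition Cb (s : R) (j : nat) := (j`!%:R)^-1 * \prod_(i < j) (s - i%:R).

Lemma fact_neq0 j : (j`!%:R : R) != 0.
Proof. by rewrite pnatr_eq0 -lt0n fact_gt0. Qed.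

Lemma Cb0 s : Cb s 0 = 1.
Proof. by rewrite /Cb big_ord0 fact0 invr1 mulr1. Qed.

Lemma Cb_pascal s j : Cb s j.+1 = Cb (s - 1) j.+1 + Cb (s - 1) j.
Proof.
rewrite /Cb big_ord_recl big_ord_recr /=.
set P := \prod_(i < j) (s - 1 - i%:R).
have -> : \prod_(i < j) (s - (bump 0 i)%:R) = P.
  by apply: eq_bigr => i _; rewrite /bump leq0n add1n -addn1 natrD; ring.
rewrite factS natrM.
have h1 := fact_neq0 j. have h2 : (j.+1%:R : R) != 0 by rewrite pnatr_eq0.
rewrite subr0.
field; by rewrite h1 addrC natr1 h2.
Qed.

Lemma sum_pascal (s : R) (b b' : nat -> R) k :
  b' 0%N = b 0%N -> (forall m, (0 < m <= k)%N -> b' m = b m + b m.-1) ->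
  \sum_(j < k.+1) Cb (s - 1) j * b' (k - j)%N = \sum_(j < k.+1) Cb s j * b (k - j)%N.
Proof.
move=> h0 hS.
have E1 : \sum_(j < k.+1) Cb (s - 1) j * b' (k - j)%N =
   \sum_(j < k.+1) Cb (s - 1) j * b (k - j)%N + \sum_(j < k) Cb (s - 1) j * b (k - j.+1)%N.
  rewrite big_ord_recr /= subnn h0 [in RHS]big_ord_recr /= subnn addrAC; congr (_ + _).
  rewrite -big_split /=; apply: eq_bigr => i _; rewrite hS; last by rewrite subn_gt0 ltn_ord leq_subr.
  by rewrite mulrDr -subnS.
rewrite E1 [in RHS]big_ord_recl /= [X in X + _ = _]big_ord_recl /= -addrA; congr (_ + _).
  by rewrite !Cb0.
rewrite -big_split /=; apply: eq_bigr => i _.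
by rewrite /bump leq0n add1n (Cb_pascal s) mulrDl.
Qed.

End Pt.

End B.
Import B.

Module C.
Set Implicit Arguments.
Unset Strict Implicit.
Set Implicit Arguments.
Unset Strict Implicit.

Section Pt2.
Variables (R : realType) (N : nat) (lam : R).
Hypothesis hlam : lam != 0.

Definition xs (x : 'I_N.+1 -> R) (j : nat) := x (inord j).
Definition aa x := lam * xs x 1 / xs x 0.
Definition bb x (m : nat) := lam ^+ m * xs x m / xs x 0.
Definition cc x (k : nat) := \sum_(j < k.+1) Cb (- aa x) j * bb x (k - j)%N.

Lemma Lpt0 x : xs (Lpt lam x) 0 = lam * xs x 0.
Proof. by rewrite /xs /Lpt inordK // addr0. Qed.

Lemma LptS x j : (j < N)%N -> xs (Lpt lam x) j.+1 = lam * xs x j.+1 + xs x j.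
Proof.
move=> hj; rewrite /xs /Lpt inordK //; case: eqP => [hk|]; last by rewrite ltnW.
by congr (_ + x _); apply: val_inj; rewrite /= inordK // ltnW.
Qed.

Lemma bb0 x : xs x 0 != 0 -> bb x 0 = 1.
Proof. by move=> h; rewrite /bb expr0 mul1r divff. Qed.

Lemma bbL x m : xs x 0 != 0 -> (0 < m <= N)%N -> bb (Lpt lam x) m = bb x m + bb x m.-1.
Proof.
move=> h /andP[m0 mN]; case: m m0 mN => // m _ mN.
rewrite /bb LptS // Lpt0 /= exprS; field; by rewrite h hlam.
Qed.

Lemma aaL x : (1 <= N)%N -> xs x 0 != 0 -> aa (Lpt lam x) = aa x + 1.
Proof. move=> hN h; rewrite /aa LptS // Lpt0; field; by rewrite h hlam. Qed.

Lemma ccL x k : (1 <= N)%N -> xs x 0 != 0 -> (k <= N)%N -> cc (Lpt lam x) k = cc x k.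
Proof.
move=> hN h hk; rewrite /cc aaL // opprD.
apply: sum_pascal; first by rewrite !bb0 // Lpt0 mulf_neq0.
move=> m /andP[m0 mk]; apply: bbL => //; rewrite m0; exact: leq_trans hk.
Qed.
End Pt2.

End C.
Import C.

Module D.
Set Implicit Arguments.
Unset Strict Implicit.
Set Implicit Arguments.
Unset Strict Implicit.

Section Poly.
Variables (R : realType) (N : nat) (lam : R).
Hypothesis hlam : lam != 0.
Hypothesis hN : (1 <= N)%N.

Definition XX (j : nat) : {mpoly R[N.+1]} := 'X_(inord j).
Definition binh (j : nat) : {mpoly R[N.+1]} :=
  (j`!%:R)^-1 *: \prod_(i < j) (- (lam *: XX 1) - i%:R *: XX 0).
Definition Rp (K : nat) : {mpoly R[N.+1]} :=
  lam *: (XX 0 ^+ K * XX 1)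
  + \sum_(j < K) lam ^+ (K - j) *: (binh j.+1 * XX 0 ^+ (K - j.+1) * XX (K - j))
  + binh K.+1.
Definition Gp (K : nat) : {mpoly R[N.+1]} :=
  if K is 0 then XX 1 else XX 0 ^+ K * XX K.+1 + (lam ^+ K.+1)^-1 *: Rp K.

Lemma mevalXX x j : meval x (XX j) = xs x j.
Proof. by rewrite mevalXU. Qed.

Lemma prod_mulc (y : R) j (F : nat -> R) :
  \prod_(i < j) (y * F i) = y ^+ j * \prod_(i < j) F i.
Proof.
elim: j => [|j IH]; first by rewrite !big_ord0 expr0 mulr1.
rewrite !big_ord_recr /= IH exprSr; ring.
Qed.

Lemma meval_binh x j : xs x 0 != 0 ->
  meval x (binh j) = xs x 0 ^+ j * Cb (- aa lam x) j.
Proof.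
move=> h; rewrite /binh mevalZ rmorph_prod /= /Cb mulrCA; congr (_ * _).
rewrite -(prod_mulc _ _ (fun i : nat => - aa lam x - i%:R)); apply: eq_bigr => i _.
rewrite mevalB mevalN !mevalZ !mevalXX /aa; field; by rewrite h.
Qed.

Lemma mevalXXn x j k : meval x (XX j ^+ k) = xs x j ^+ k.
Proof. by rewrite rmorphXn /= mevalXX. Qed.

Lemma Jform x K : xs x 0 != 0 -> (K < N)%N ->
  Jval K.+1 (Gp K) (inord 0) x = (lam ^+ K.+1)^-1 * (aa lam x + cc lam x K.+1).
Proof.
move=> h hK; rewrite /Jval -/(xs x 0).
case: K hK => [|K] hK.
  rewrite /= mevalXX /cc !big_ord_recr big_ord0 /= Cb0 bb0 // /Cb big_ord1 /bb /aa.
  rewrite subn0 /= invr1 subr0 expr1; field; by rewrite h hlam.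
rewrite /Gp mevalD mevalM mevalXXn mevalZ /Rp !mevalD mevalZ mevalM mevalXXn !mevalXX.
rewrite raddf_sum /= meval_binh // /cc [in RHS]big_ord_recl /= Cb0 [in RHS]big_ord_recr /= subnn bb0 //.
have E : \sum_(i < K.+1) meval x (lam ^+ (K.+1 - i) *: (binh i.+1 * XX 0 ^+ (K.+1 - i.+1) * XX (K.+1 - i)))
   = xs x 0 ^+ K.+2 * \sum_(i < K.+1) Cb (- aa lam x) (bump 0 i) * bb lam x (K.+2 - bump 0 i).
  rewrite mulr_sumr; apply: eq_bigr => i _.
  rewrite mevalZ !mevalM mevalXXn meval_binh // !mevalXX /bump leq0n add1n subSS /bb.
  have -> : xs x 0 ^+ i.+1 * Cb (- aa lam x) i.+1 * xs x 0 ^+ (K - i) = xs x 0 ^+ K.+1 * Cb (- aa lam x) i.+1.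
    by rewrite mulrAC -exprD addSn subnKC // -ltnS.
  rewrite subSn //; last by rewrite -ltnS.
  rewrite subSS subSn; last by rewrite -ltnS.
  rewrite [xs x 0 ^+ K.+2]exprS; field; by rewrite h.
rewrite E /bump /= add1n subn0 /bb /aa !exprS.
field; by rewrite h hlam !expf_neq0.
Qed.
End Poly.

End D.
Import D.

Module E.
Set Implicit Arguments.
Unset Strict Implicit.
Set Implicit Arguments.
Unset Strict Implicit.

Section Poly2.
Variables (R : realType) (N : nat) (lam : R).
Hypothesis hlam : lam != 0.
Hypothesis hN : (1 <= N)%N.

Local Notation XX := (@XX R N).

Lemma Jinv x K : xs x 0 != 0 -> (K < N)%N ->
  Jval K.+1 (Gp N lam K) (inord 0) (Lpt lam x) = Jval K.+1 (Gp N lam K) (inord 0) x + 1 / lam ^+ K.+1.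
Proof.
move=> h hK; have hL : xs (Lpt lam x) 0 != 0 by rewrite Lpt0 mulf_neq0.
rewrite !Jform // aaL // ccL //; ring.
Qed.

Lemma goodMS d m (P Q : {mpoly R[N.+1]}) : good d m P -> good 1 m Q -> good d.+1 m (P * Q).
Proof. by move=> hP hQ; have := goodM hP hQ; rewrite addn1. Qed.

Lemma goodXX m j : (j <= N)%N -> (j <= m)%N -> good 1 m (XX j).
Proof. by move=> hj hm; apply: goodX; rewrite inordK. Qed.

Lemma goodXXn m j k : (j <= N)%N -> (j <= m)%N -> good k m (XX j ^+ k).
Proof. by move=> hj hm; apply: goodXn; rewrite inordK. Qed.

Lemma good_binh j m : (1 <= m)%N -> good j m (binh N lam j).
Proof.
move=> hm; apply: goodZ; apply: good_prod => i.
apply: goodD; first by apply/goodN/goodZ/goodXX.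
by apply/goodN/goodZ/goodXX.
Qed.

Lemma good_Rp K : (K < N)%N -> good K.+2 K.+1 (Rp N lam K.+1).
Proof.
move=> hK; rewrite /Rp; apply: goodD; first apply: goodD.
- apply: goodZ; apply: goodMS; first exact: goodXXn.
  by apply: goodXX => //; apply: leq_trans hK.
- apply: good_sum => i; apply: goodZ.
  have -> : K.+2 = (i.+1 + (K.+1 - i.+1)).+1%N by rewrite subnKC.
  apply: goodMS; first apply: goodM.
  + exact: good_binh.
  + exact: goodXXn.
  + apply: goodXX; last exact: leq_subr.
    exact: leq_trans (leq_subr _ _) hK.
- exact: good_binh.
Qed.

Lemma good_Gp K : (K < N)%N -> good K.+1 K.+1 (Gp N lam K).
Proof.
case: K => [|K] hK /=; first exact: goodXX.
apply: goodD; last by apply: goodZ; apply: (goodW (leqnSn _)); apply: good_Rp; exact: ltnW.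
apply: goodMS; first exact: goodXXn.
exact: goodXX.
Qed.

Lemma deriv_XX j : (j <= N)%N -> (XX j)^`M(inord j) = 1.
Proof.
move=> hj; rewrite /D.XX mderivX mnm1E eqxx scale1r.
have -> : (U_(inord j) - U_(inord j))%MM = 0%MM :> 'X_{1..N.+1}.
  by apply/mnmP => i; rewrite mnmBE subnn mnm0E.
by rewrite mpolyX0.
Qed.

Lemma deriv_Gp K : (K < N)%N -> (Gp N lam K)^`M(inord K.+1) = XX 0 ^+ K.
Proof.
move=> hK; case: K hK => [|K] hK /=; first by rewrite deriv_XX.
rewrite mderivD mderivZ mderivM deriv_XX // mulr1.
rewrite (good_deriv (goodXXn (k:=K.+1) (leq0n N) (leqnn 0))) ?inordK //.
rewrite (good_deriv (good_Rp (ltnW hK))) ?inordK //.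
by rewrite mul0r scaler0 !addr0 add0r.
Qed.

Lemma XX0n_neq0 K : XX 0 ^+ K != 0.
Proof.
apply/negP => /eqP e; have := congr1 (meval (fun _ => 1 : R)) e.
by rewrite mevalXXn /xs expr1n meval0; apply/eqP; rewrite oner_neq0.
Qed.

Lemma Gp_neq0 K : (K < N)%N -> Gp N lam K != 0.
Proof.
move=> hK; apply/negP => /eqP e; have := deriv_Gp hK; rewrite e mderiv0 => /esym/eqP.
by rewrite (negbTE (XX0n_neq0 K)).
Qed.

Lemma msize_Gp K : (K < N)%N -> msize (Gp N lam K) = K.+2.
Proof. move=> hK; exact: good_msize (good_Gp hK) (Gp_neq0 hK). Qed.

End Poly2.

End E.
Import E.

Module F.
Set Implicit Arguments.
Unset Strict Implicit.
Set Implicit Arguments.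
Unset Strict Implicit.

Section Mx.
Variables (R : realType) (N : nat) (lam : R).
Hypothesis hlam : lam != 0.
Hypothesis hN : (1 <= N)%N.

Lemma dJ_diag K x : xs x 0 != 0 -> (K < N)%N ->
  dJval K.+1 (Gp N lam K) (inord 0) (inord K.+1) x = (xs x 0)^-1.
Proof.
move=> h hK; rewrite /dJval deriv_Gp // mevalXXn.
have -> : (inord K.+1 == inord 0 :> 'I_N.+1) = false.
  by apply/negbTE; apply/negP => /eqP /(congr1 val); rewrite /= !inordK.
rewrite mulr0 subr0 -/(xs x 0) !exprS; field; by rewrite h expf_neq0.
Qed.

Lemma dJ_zero K (j : 'I_N.+1) x : (K < N)%N -> (K.+1 < j)%N ->
  dJval K.+1 (Gp N lam K) (inord 0) j x = 0.
Proof.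
move=> hK hj; rewrite /dJval (good_deriv (@good_Gp _ N lam hN K hK) hj) meval0 mul0r.
have -> : (j == inord 0) = false.
  by apply/negbTE; apply/negP => /eqP /(congr1 val); rewrite /= inordK // => e; rewrite e in hj.
by rewrite mulr0 subr0 mul0r.
Qed.

Lemma rank_full x : xs x 0 != 0 ->
  \rank (\matrix_(i < N, j < N.+1) dJval i.+1 (Gp N lam i) (inord 0) j x) = N.
Proof.
move=> h; set M := \matrix_(i < N, j < N.+1) _.
apply/eqP; rewrite eqn_leq rank_leq_row /=.
pose g := fun j : 'I_N => (lift ord0 j : 'I_N.+1).
have hA : \rank (mxsub id g M) = N.
  apply: mxrank_unit; rewrite unitmxE unitfE det_trig.
    apply/prodf_neq0 => i _; rewrite !mxE.
    have -> : g i = inord i.+1.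
      by apply: val_inj; rewrite /= inordK ?ltnS ?ltn_ord // /bump leq0n add1n.
    by rewrite dJ_diag // invr_eq0.
  apply/is_trig_mxP => i j hij; rewrite !mxE dJ_zero //.
rewrite -{1}hA.
have -> : mxsub id g M = M *m mxsub id g 1%:M by rewrite mulmx_colsub mulmx1.
exact: mxrankM_maxl.
Qed.
End Mx.

End F.
Import F.

Unset Implicit Arguments.
Set Strict Implicit.
Theorem corollary3 (R : realType) (n : nat) (hn : (2 <= n)%N) (lam : R) (hlam : lam != 0) :
  let x0 : 'I_n := Ordinal (leq_trans (isT : (0 < 2)%N) hn) in
  exists G : 'I_n.-1 -> {mpoly R[n]},
    (forall i : 'I_n.-1, mpoly_in_first_vars i.+1 (G i) /\ msize (G i) = i.+2) /\
    (forall (i : 'I_n.-1) (x : 'I_n -> R), x x0 != 0 ->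
        Jval i.+1 (G i) x0 (Lpt lam x) = Jval i.+1 (G i) x0 x + 1 / lam ^+ i.+1) /\
    (exists Q : {mpoly R[n]}, Q != 0 /\
       forall x : 'I_n -> R, x x0 != 0 -> meval x Q != 0 ->
         \rank (\matrix_(i < n.-1, j < n) dJval i.+1 (G i) x0 j x) = n.-1).
Proof.
case: n hn => [|N] // hn x0 /=.
have hN : (1 <= N)%N by [].
have ex0 : x0 = inord 0 by apply: val_inj; rewrite /= inordK.
rewrite ex0.
exists (fun i : 'I_N => Gp N lam i); split; last split.
- move=> i; split; last exact: msize_Gp.
  move=> mon /(@good_Gp _ N lam hN i (ltn_ord i)) [_ H] j hj; exact: H.
- move=> i x hx; apply: Jinv => //; exact: ltn_ord.
- exists 1; split; first exact: oner_neq0.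
  move=> x hx _; exact: rank_full.
Qed.
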